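(* Under the setting described in the context, \begin{align*} \Psi & = \sum_{k=0}^{\infty} P_{\lambda++}^k P_{\lambda+-} \left(I- \lambda^{-1} U\right)^{-k-1} \\ & = \sum_{n=0}^{\infty} \left(I- \mu^{-1}T_{++}\right)^{-n-1}P_{\mu+-}V_\mu^n \\ & = \sum_{m=0}^{\infty} Q^m\left(I-\mu^{-1}T_{++}\right)^{-1} \left(P_{\lambda+-}W + P_{\mu+-}\right)W^m, \end{align*} where \[ Q:= \left(I-\mu^{-1}T_{++}\right)^{-1}\left(I+\lambda^{-1}T_{++}\right), \quad W := \left(I + \mu^{-1}U\right)\left(I- \lambda^{-1}U\right)^{-1}, \] and $P_{\mu} := I + \mu^{-1}T$, analogously to $P_\lambda$.
   Context: Consider a fluid queue $\{X_t,\varphi_t\}$ whose phase $\varphi_t$ is a continuous-time Markov chain on a finite state space $\mathcal{S}=\mathcal{S}_+\cup\mathcal{S}_-$ with generator $T$, and whose level moves at unit rates: rate $+1$ in phases of $\mathcal{S}_+$ and rate $-1$ in phases of $\mathcal{S}_-$. Partition $T$ into blocks $T_{++},T_{+-},T_{-+},T_{--}$ according to $\mathcal{S}_+,\mathcal{S}_-$. Let $\Psi$ be the return probability matrix: $\Psi_{ij}$ is the probability that the fluid, starting in phase $i\in\mathcal{S}_+$ at some level, first returns to that level (from above) in phase $j\in\mathcal{S}_-$; equivalently $\Psi$ is the minimal nonnegative solution of $T_{+-} + \Psi T_{--} + T_{++}\Psi + \Psi T_{-+}\Psi = 0$. Let $U := T_{--} + T_{-+}\Psi$ be the generator of the phase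 of the downward record process. For uniformization rates $\lambda,\mu>0$ (large enough that the matrices below are stochastic), set $P_\lambda := I + \lambda^{-1}T$, $P_\mu := I+\mu^{-1}T$, $V_\mu := I + \mu^{-1}U$, with $P_{\lambda++}, P_{\lambda+-}, P_{\mu+-}$ the corresponding sub-blocks. *)

(* Defs.v *)
From HB Require Import structures.
From mathcomp Require Import all_boot all_order all_algebra.
From mathcomp Require Import all_classical all_reals.
From mathcomp Require Import topology normedtype sequences.
Set Implicit Arguments. Unset Strict Implicit. Unset Printing Implicit Defensive.
Import Order.TTheory GRing.Theory Num.Theory.
Import numFieldNormedType.Exports.
Local Open Scope classical_set_scope.
Local Open Scope ring_scope.

(* Phases: S = S_+ (first p indices) followed by S_- (last m indices). *)

Definition is_generator (R : realType) (n : nat) (T : 'M[R]_n) : Prop :=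
  (forall i j, i != j -> 0 <= T i j) /\ (forall i, \sum_j T i j = 0).

Definition stochastic (R : realType) (n : nat) (P : 'M[R]_n) : Prop :=
  (forall i j, 0 <= P i j) /\ (forall i, \sum_j P i j = 1).

Definition mx_nonneg (R : realType) (a b : nat) (X : 'M[R]_(a, b)) : Prop :=
  forall i j, 0 <= X i j.

Definition riccati (R : realType) (p m : nat) (T : 'M[R]_(p + m))
    (X : 'M[R]_(p, m)) : Prop :=
  ursubmx T + X *m drsubmx T + ulsubmx T *m X + X *m dlsubmx T *m X = 0.

Definition minimal_nonneg_solution (R : realType) (p m : nat)
    (T : 'M[R]_(p + m)) (Psi : 'M[R]_(p, m)) : Prop :=
  [/\ mx_nonneg Psi, riccati T Psi &
      forall X : 'M[R]_(p, m), mx_nonneg X -> riccati T X ->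
        forall i j, Psi i j <= X i j].

Definition mx_series_to (R : realType) (a b : nat) (A : nat -> 'M[R]_(a, b))
    (S : 'M[R]_(a, b)) : Prop :=
  forall i j, series (fun k => A k i j) @ \oo --> S i j.

(* Main.v *)
Require Import Defs.
From HB Require Import structures.
From mathcomp Require Import all_boot all_order all_algebra.
From mathcomp Require Import all_classical all_reals.
From mathcomp Require Import topology normedtype sequences.
From mathcomp Require Import ring lra.
Set Implicit Arguments. Unset Strict Implicit. Unset Printing Implicit Defensive.
Import Order.TTheory GRing.Theory Num.Theory.
Import numFieldNormedType.Exports.
Local Open Scope classical_set_scope.
Local Open Scope ring_scope.

Section MxCvg.
Variable R : realType.

Definition mxcvg (a b : nat) (Xs : nat -> 'M[R]_(a, b)) (X : 'M[R]_(a, b)) :=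
  forall i j, (fun n => Xs n i j) @ \oo --> X i j.

Lemma cvg_sumR (I : Type) (r : seq I) (f : I -> nat -> R) (l : I -> R) :
  (forall i, f i n @[n --> \oo] --> l i) ->
  (\sum_(i <- r) f i n) @[n --> \oo] --> \sum_(i <- r) l i.
Proof.
move=> H; elim: r => [|i r IH].
  rewrite big_nil; under eq_cvg do rewrite big_nil; exact: cvg_cst.
rewrite big_cons; under eq_cvg do rewrite big_cons.
exact: cvgD.
Qed.

Lemma mxcvg_cst a b (X : 'M[R]_(a, b)) : mxcvg (fun=> X) X.
Proof. by move=> i j; exact: cvg_cst. Qed.

Lemma mxcvgD a b (Xs Ys : nat -> 'M[R]_(a, b)) X Y :
  mxcvg Xs X -> mxcvg Ys Y -> mxcvg (fun n => Xs n + Ys n) (X + Y).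
Proof.
move=> HX HY i j; rewrite mxE; under eq_cvg do rewrite mxE.
exact: cvgD.
Qed.

Lemma mxcvgM a b c (Xs : nat -> 'M[R]_(a, b)) (Ys : nat -> 'M[R]_(b, c)) X Y :
  mxcvg Xs X -> mxcvg Ys Y -> mxcvg (fun n => Xs n *m Ys n) (X *m Y).
Proof.
move=> HX HY i j; rewrite mxE; under eq_cvg do rewrite mxE.
apply: cvg_sumR => k; exact: cvgM.
Qed.

Lemma mxcvgZ a b (k : R) (Xs : nat -> 'M[R]_(a, b)) X :
  mxcvg Xs X -> mxcvg (fun n => k *: Xs n) (k *: X).
Proof.
move=> HX i j; rewrite mxE; under eq_cvg do rewrite mxE.
exact: cvgMl_tmp.
Qed.

Lemma mxcvg_unique a b (Xs : nat -> 'M[R]_(a, b)) X Y :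
  mxcvg Xs X -> mxcvg Xs Y -> X = Y.
Proof.
move=> HX HY; apply/matrixP => i j.
by rewrite -(cvg_lim _ (HX i j)) // (cvg_lim _ (HY i j)).
Qed.

Lemma mxcvg_shift a b (Xs : nat -> 'M[R]_(a, b)) X :
  mxcvg Xs X -> mxcvg (fun n => Xs n.+1) X.
Proof. by move=> HX i j; rewrite (cvg_shiftS (fun n => Xs n i j)). Qed.

Definition mx_le a b (X Y : 'M[R]_(a, b)) := forall i j, X i j <= Y i j.

Lemma mxcvg_le a b (Xs : nat -> 'M[R]_(a, b)) X B :
  mxcvg Xs X -> (forall n, mx_le (Xs n) B) -> mx_le X B.
Proof.
move=> HX HB i j; apply: (cvgr_to_le (HX i j)); near=> n; exact: HB.
Unshelve. all: by end_near. Qed.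

Lemma mxcvg_mono a b (Xs : nat -> 'M[R]_(a, b)) B :
  (forall n, mx_le (Xs n) (Xs n.+1)) -> (forall n, mx_le (Xs n) B) ->
  exists X, [/\ mxcvg Xs X, forall n, mx_le (Xs n) X & mx_le X B].
Proof.
move=> Hinc HB.
have nd : forall i j, nondecreasing_seq (fun n => Xs n i j).
  move=> i j; apply/nondecreasing_seqP => n; exact: Hinc.
have cv : forall i j, cvgn (fun n => Xs n i j).
  move=> i j; apply: nondecreasing_is_cvgn => //.
  by exists (B i j) => _ [n _ <-]; exact: HB.
exists (\matrix_(i, j) limn (fun n => Xs n i j)).
have HX : mxcvg Xs (\matrix_(i, j) limn (fun n => Xs n i j)).
  by move=> i j; rewrite mxE; exact: cv.
split => //.
- by move=> n i j; rewrite mxE; exact: nondecreasing_cvgn_le.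
- exact: mxcvg_le.
Qed.

End MxCvg.

Section MxOrder.
Variable R : realType.
Implicit Types a b c : nat.

Lemma mx_le_refl a b (X : 'M[R]_(a, b)) : mx_le X X.
Proof. by move=> i j. Qed.

Lemma mx_le_trans a b (X Y Z : 'M[R]_(a, b)) : mx_le X Y -> mx_le Y Z -> mx_le X Z.
Proof. by move=> H1 H2 i j; exact: le_trans (H1 i j) (H2 i j). Qed.

Lemma mx_le_anti a b (X Y : 'M[R]_(a, b)) : mx_le X Y -> mx_le Y X -> X = Y.
Proof. by move=> H1 H2; apply/matrixP => i j; apply/eqP; rewrite eq_le H1 H2. Qed.

Lemma mx_leD a b (X1 X2 Y1 Y2 : 'M[R]_(a, b)) :
  mx_le X1 Y1 -> mx_le X2 Y2 -> mx_le (X1 + X2) (Y1 + Y2).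
Proof. by move=> H1 H2 i j; rewrite !mxE lerD. Qed.

Lemma mx_leZ a b (k : R) (X Y : 'M[R]_(a, b)) :
  0 <= k -> mx_le X Y -> mx_le (k *: X) (k *: Y).
Proof. by move=> hk H i j; rewrite !mxE ler_wpM2l. Qed.

Lemma mx_le_mull a b c (A : 'M[R]_(a, b)) (X Y : 'M[R]_(b, c)) :
  mx_nonneg A -> mx_le X Y -> mx_le (A *m X) (A *m Y).
Proof.
move=> hA H i j; rewrite !mxE; apply: ler_sum => k _; exact: ler_wpM2l.
Qed.

Lemma mx_le_mulr a b c (A : 'M[R]_(b, c)) (X Y : 'M[R]_(a, b)) :
  mx_nonneg A -> mx_le X Y -> mx_le (X *m A) (Y *m A).
Proof.
move=> hA H i j; rewrite !mxE; apply: ler_sum => k _; exact: ler_wpM2r.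
Qed.

Lemma mx_nonnegE a b (X : 'M[R]_(a, b)) : mx_nonneg X <-> mx_le 0 X.
Proof. by split => H i j; move: (H i j); rewrite mxE. Qed.

Lemma mx_nonnegM a b c (A : 'M[R]_(a, b)) (B : 'M[R]_(b, c)) :
  mx_nonneg A -> mx_nonneg B -> mx_nonneg (A *m B).
Proof.
move=> hA hB i j; rewrite mxE; apply: sumr_ge0 => k _; exact: mulr_ge0.
Qed.

Lemma mx_nonnegD a b (A B : 'M[R]_(a, b)) :
  mx_nonneg A -> mx_nonneg B -> mx_nonneg (A + B).
Proof. by move=> hA hB i j; rewrite mxE addr_ge0. Qed.

Lemma mx_nonnegZ a b (k : R) (A : 'M[R]_(a, b)) :
  0 <= k -> mx_nonneg A -> mx_nonneg (k *: A).
Proof. by move=> hk hA i j; rewrite mxE mulr_ge0. Qed.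

Lemma mx_nonneg1 a : mx_nonneg (1%:M : 'M[R]_a).
Proof. by move=> i j; rewrite mxE ler0n. Qed.

Lemma mx_nonneg0 a b : mx_nonneg (0 : 'M[R]_(a, b)).
Proof. by move=> i j; rewrite mxE. Qed.

Lemma mx_nonnegX a (A : 'M[R]_a) k : mx_nonneg A -> mx_nonneg (A ^+ k).
Proof.
move=> hA; elim: k => [|k IH]; first by rewrite expr0; exact: mx_nonneg1.
by rewrite exprS; exact: mx_nonnegM.
Qed.

Lemma minprinc n k (M : 'M[R]_n) (x : 'M[R]_(n, k)) :
  (forall i j, i != j -> M i j <= 0) -> (forall i, 0 < \sum_j M i j) ->
  mx_nonneg (M *m x) -> mx_nonneg x.
Proof.
move=> off rs Mx i0 j; rewrite leNgt; apply/negP => xneg.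
case: (@arg_minP _ _ _ i0 xpredT (fun i => x i j) isT) => i _ Hmin.
have xi : x i j < 0 by apply: le_lt_trans (Hmin i0 isT) xneg.
have := Mx i j; rewrite mxE leNgt => /negP; apply.
apply: (@le_lt_trans _ _ (\sum_k0 M i k0 * x i j)).
  apply: ler_sum => k0 _; case: (eqVneq i k0) => [->//|ne].
  by apply: ler_wnM2l; [exact: off | exact: Hmin].
by rewrite -mulr_suml pmulr_rlt0 // rs.
Qed.

End MxOrder.

Section Mmat.
Variable R : realType.

Lemma mmat n (K : 'M[R]_n) (a : R) : 0 < a ->
  (forall i j, i != j -> 0 <= K i j) ->
  mx_le (K *m const_mx 1) (0 : 'cV_n) ->
  (1%:M - a *: K) \in unitmx /\ mx_nonneg (invmx (1%:M - a *: K)).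
Proof.
move=> a0 offK rsK; set M := 1%:M - a *: K.
have off : forall i j, i != j -> M i j <= 0.
  move=> i j ne; rewrite !mxE (negbTE ne) mulr0n sub0r oppr_le0; idtac.
  by apply: mulr_ge0; [exact: ltW | exact: offK].
have rs : forall i, 0 < \sum_j M i j.
  move=> i; have -> : \sum_j M i j = (M *m (const_mx 1 : 'cV_n)) i 0.
    by rewrite mxE; apply: eq_bigr => j _; rewrite [X in _ = _ * X]mxE mulr1.
  rewrite mulmxBl mul1mx -scalemxAl !mxE.
  have h := rsK i 0; rewrite [X in _ <= X]mxE [X in X <= _]mxE in h.
  move: h; set s := \sum_(j < n) _ => h; nra.
have inj : forall x : 'cV[R]_n, M *m x = 0 -> x = 0.
  move=> x hx; apply/matrixP => i j; apply/eqP; rewrite mxE eq_le.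
  have h1 : mx_nonneg x by apply: (minprinc off rs); rewrite hx; exact: mx_nonneg0.
  have h2 : mx_nonneg (- x).
    by apply: (minprinc off rs); rewrite mulmxN hx oppr0; exact: mx_nonneg0.
  by have := h2 i j; rewrite mxE oppr_ge0 => ->; rewrite h1.
have U : M \in unitmx.
  rewrite -unitmx_tr -row_free_unit -kermx_eq0; apply/eqP/row_matrixP => i.
  rewrite row0; set v := row i _.
  have hv : v *m M^T = 0 by apply/sub_kermxP; exact: row_sub.
  have := congr1 trmx hv; rewrite trmx_mul trmxK trmx0 => /inj hv'.
  by rewrite -(trmxK v) hv' trmx0.
split => //; apply: (minprinc off rs); rewrite mulmxV //; exact: mx_nonneg1.
Qed.

End Mmat.

Section SeriesFix.
Variable R : realType.

Lemma series_fix a b (L : 'M[R]_a) (C Psi : 'M[R]_(a, b)) (Rm : 'M[R]_b) :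
  mx_nonneg L -> mx_nonneg C -> mx_nonneg Rm -> mx_nonneg Psi ->
  Psi = C + L *m Psi *m Rm ->
  exists S, [/\ mx_series_to (fun k => L ^+ k *m C *m Rm ^+ k) S,
     mx_le S Psi, mx_nonneg S & S = C + L *m S *m Rm].
Proof.
move=> hL hC hR hP HP.
pose t k := L ^+ k *m C *m Rm ^+ k.
pose Sn N := \sum_(k < N) t k.
have tnn : forall k, mx_nonneg (t k).
  by move=> k; apply: mx_nonnegM; [apply: mx_nonnegM => //|]; exact: mx_nonnegX.
have rec : forall N, Sn N.+1 = C + L *m Sn N *m Rm.
  move=> N; rewrite /Sn big_ord_recl /t expr0 mul1mx mulmx1; congr (_ + _).
  rewrite mulmx_sumr mulmx_suml; apply: eq_bigr => i _.
  by rewrite /= exprS exprSr -!mulmxE !mulmxA.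
have rem : forall N, Psi = Sn N + L ^+ N *m Psi *m Rm ^+ N.
  elim=> [|N IH]; first by rewrite /Sn big_ord0 add0r expr0 mul1mx mulmx1.
  rewrite {1}HP {1}IH mulmxDr mulmxDl addrA -rec; congr (_ + _).
  by rewrite exprS exprSr -!mulmxE !mulmxA.
have le_Psi : forall N, mx_le (Sn N) Psi.
  move=> N i j; have -> : Psi i j = (Sn N + L ^+ N *m Psi *m Rm ^+ N) i j by rewrite -rem.
  rewrite mxE lerDl.
  suff h : mx_nonneg (L ^+ N *m Psi *m Rm ^+ N) by exact: h.
  apply: mx_nonnegM; [apply: mx_nonnegM => //|]; exact: mx_nonnegX.
have inc : forall N, mx_le (Sn N) (Sn N.+1).
  move=> N i j; rewrite /Sn big_ord_recr /= mxE lerDl; exact: tnn.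
have [S [HS SnS SP]] := mxcvg_mono inc le_Psi.
exists S; split => //.
- move=> i j.
  have -> : series (fun k => t k i j) = (fun n => Sn n i j).
    by apply: funext => n; rewrite /series /= /Sn summxE big_mkord.
  exact: HS.
- apply/mx_nonnegE; apply: mx_le_trans (SnS 0%N).
  by rewrite /Sn big_ord0; exact: mx_le_refl.
- have h1 := mxcvg_shift HS.
  have e : (fun N => Sn N.+1) = (fun N => C + L *m Sn N *m Rm).
    by apply: funext => N; exact: rec.
  rewrite e in h1.
  apply: (mxcvg_unique h1); apply: mxcvgD; first exact: mxcvg_cst.
  apply: mxcvgM; last exact: mxcvg_cst.
  apply: mxcvgM => //; exact: mxcvg_cst.
Qed.
End SeriesFix.

Section Blocks.
Variables (R : realType) (p m : nat) (T : 'M[R]_(p + m)).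
Hypothesis gen : is_generator T.

Lemma gen_ur : mx_nonneg (ursubmx T).
Proof. move=> i j; rewrite !mxE; apply: gen.1; by rewrite eq_lrshift. Qed.

Lemma gen_dl : mx_nonneg (dlsubmx T).
Proof. move=> i j; rewrite !mxE; apply: gen.1; by rewrite eq_rlshift. Qed.

Lemma gen_ul_off i j : i != j -> 0 <= ulsubmx T i j.
Proof. move=> ne; rewrite !mxE; apply: gen.1; by rewrite (inj_eq (@lshift_inj _ _)). Qed.

Lemma gen_dr_off i j : i != j -> 0 <= drsubmx T i j.
Proof. move=> ne; rewrite !mxE; apply: gen.1; by rewrite (inj_eq (@rshift_inj _ _)). Qed.

Lemma gen_rows :
  ulsubmx T *m (const_mx 1 : 'cV_p) + ursubmx T *m (const_mx 1 : 'cV_m) = 0 /\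
  dlsubmx T *m (const_mx 1 : 'cV_p) + drsubmx T *m (const_mx 1 : 'cV_m) = 0.
Proof.
have h : T *m (const_mx 1 : 'cV_(p + m)) = 0.
  apply/matrixP => i j; rewrite !mxE -[RHS](gen.2 i); apply: eq_bigr => k _.
  by rewrite mxE mulr1.
move: h; rewrite -{1}(submxK T) -col_mx_const mul_block_col -(col_mx0 _ p m 1).
by move/eq_col_mx.
Qed.

End Blocks.

Section Ric.
Variables (R : realType) (p m : nat) (T : 'M[R]_(p + m)) (c : R).
Hypotheses (gen : is_generator T) (c0 : 0 < c) (hc : forall i, 0 <= c + T i i).

Definition Fr (X : 'M[R]_(p, m)) :=
  ursubmx T + X *m drsubmx T + ulsubmx T *m X + X *m dlsubmx T *m X.
Definition kc := (c *+ 2)^-1.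
Definition G X := X + kc *: Fr X.
Definition Gf X := kc *: ((ulsubmx T + c%:M) *m X + X *m (drsubmx T + c%:M)
   + ursubmx T + X *m dlsubmx T *m X).

Lemma c2_neq0 : c *+ 2 != 0.
Proof. by rewrite lt0r_neq0 // pmulrn_lgt0. Qed.

Lemma kc_ge0 : 0 <= kc.
Proof. by rewrite /kc invr_ge0 mulrn_wge0 // ltW. Qed.

Lemma kcc : kc * c = 2^-1.
Proof. rewrite /kc; field; have := c0; lra. Qed.

Lemma GE X : G X = Gf X.
Proof.
rewrite /G /Gf /Fr mulmxDl mulmxDr mul_scalar_mx mul_mx_scalar.
move: (ulsubmx T *m X) (X *m drsubmx T) (X *m dlsubmx T *m X) (ursubmx T) => a1 a2 a3 a4.
apply/matrixP => i j; rewrite !mxE /kc; field; have := c0; lra.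
Qed.

Lemma Tpc_nn : mx_nonneg (ulsubmx T + c%:M).
Proof.
move=> i j; rewrite !mxE; case: (eqVneq i j) => [->|ne].
  by rewrite mulr1n addrC; exact: hc.
rewrite mulr0n addr0; have := gen_ul_off gen ne; by rewrite !mxE.
Qed.

Lemma Tmc_nn : mx_nonneg (drsubmx T + c%:M).
Proof.
move=> i j; rewrite !mxE; case: (eqVneq i j) => [->|ne].
  by rewrite mulr1n addrC; exact: hc.
rewrite mulr0n addr0; have := gen_dr_off gen ne; by rewrite !mxE.
Qed.

Lemma Gnn X : mx_nonneg X -> mx_nonneg (G X).
Proof.
move=> hX; rewrite GE; apply: mx_nonnegZ; first exact: kc_ge0.
apply: mx_nonnegD; last by apply: mx_nonnegM => //; apply: mx_nonnegM => //; exact: gen_dl.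
apply: mx_nonnegD; last exact: gen_ur.
apply: mx_nonnegD; apply: mx_nonnegM => //; [exact: Tpc_nn | exact: Tmc_nn].
Qed.

Lemma Gmono X Y : mx_nonneg X -> mx_le X Y -> mx_le (G X) (G Y).
Proof.
move=> hX hXY; have hY : mx_nonneg Y.
  by apply/mx_nonnegE; apply: mx_le_trans hXY; apply/mx_nonnegE.
rewrite !GE; apply: mx_leZ; first exact: kc_ge0.
apply: mx_leD; last first.
  apply: (@mx_le_trans _ _ _ _ (Y *m dlsubmx T *m X)).
    by apply: mx_le_mulr => //; apply: mx_le_mulr => //; exact: gen_dl.
  apply: mx_le_mull => //; apply: mx_nonnegM => //; exact: gen_dl.
apply: mx_leD; last exact: mx_le_refl.
apply: mx_leD; first by apply: mx_le_mull => //; exact: Tpc_nn.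
by apply: mx_le_mulr => //; exact: Tmc_nn.
Qed.

Lemma G_le_S S : mx_le (Fr S) 0 -> mx_le (G S) S.
Proof.
move=> h i j; have := h i j; rewrite [X in _ <= X]mxE => hh.
rewrite /G mxE [X in _ + X <= _]mxE gerDl.
by apply: mulr_ge0_le0 => //; exact: kc_ge0.
Qed.

Lemma Grow X : mx_nonneg X -> mx_le (X *m (const_mx 1 : 'cV_m)) (const_mx 1 : 'cV_p) ->
  mx_le (G X *m (const_mx 1 : 'cV_m)) (const_mx 1 : 'cV_p).
Proof.
move=> hX H; rewrite GE -scalemxAl.
have -> : ((ulsubmx T + c%:M) *m X + X *m (drsubmx T + c%:M) + ursubmx T
   + X *m dlsubmx T *m X) *m (const_mx 1 : 'cV_m) =
  (ulsubmx T + c%:M) *m (X *m const_mx 1) + X *m ((drsubmx T + c%:M) *m const_mx 1)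
  + ursubmx T *m const_mx 1 + X *m (dlsubmx T *m (X *m const_mx 1)).
  by rewrite !mulmxDl !mulmxDr !mulmxDl !mulmxA.
refine (@mx_le_trans _ _ _ _ (kc *: ((ulsubmx T + c%:M) *m (const_mx 1 : 'cV_p)
   + X *m ((drsubmx T + c%:M) *m const_mx 1) + ursubmx T *m const_mx 1
   + X *m (dlsubmx T *m (const_mx 1 : 'cV_p)))) _ _ _).
  apply: mx_leZ; first exact: kc_ge0.
  apply: mx_leD; last by apply: mx_le_mull => //; apply: mx_le_mull => //; exact: gen_dl.
  apply: mx_leD; last exact: mx_le_refl.
  apply: mx_leD; last exact: mx_le_refl.
  by apply: mx_le_mull => //; exact: Tpc_nn.
have [r1 r2] := gen_rows gen.
have e1 : ursubmx T *m (const_mx 1 : 'cV_m) = - (ulsubmx T *m const_mx 1).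
  by apply/eqP; rewrite -addr_eq0 addrC r1.
have e2 : drsubmx T *m (const_mx 1 : 'cV_m) = - (dlsubmx T *m const_mx 1).
  by apply/eqP; rewrite -addr_eq0 addrC r2.
rewrite !mulmxDl !mul_scalar_mx e1 e2 mulmxDr mulmxN -scalemxAr.
move: H; move: (ulsubmx T *m (const_mx 1 : 'cV_p)) (X *m (dlsubmx T *m (const_mx 1 : 'cV_p)))
  (X *m (const_mx 1 : 'cV_m)) => u v y H i j.
have := H i j; rewrite !mxE => hy.
have -> : kc * (u i j + c * 1 + (- v i j + c * y i j) + - u i j + v i j) =
  (kc * c) + (kc * c) * y i j by ring.
rewrite kcc; lra.
Qed.

Lemma ric_iter : exists Xs : 'M[R]_(p, m),
  [/\ mx_nonneg Xs, riccati T Xs,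
      mx_le (Xs *m (const_mx 1 : 'cV_m)) (const_mx 1 : 'cV_p) &
      forall S, mx_nonneg S -> mx_le (Fr S) 0 -> mx_le Xs S].
Proof.
pose x n := iter n G 0.
have P : forall n, [/\ mx_nonneg (x n), mx_le (x n) (x n.+1) &
    mx_le (x n *m (const_mx 1 : 'cV_m)) (const_mx 1 : 'cV_p)].
  elim => [|n [h1 h2 h3]].
    split; first exact: mx_nonneg0.
      by apply/mx_nonnegE; apply: Gnn; exact: mx_nonneg0.
    by move=> i j; rewrite /x /= mul0mx !mxE ler01.
  split; first exact: Gnn.
    exact: Gmono.
  exact: Grow.
have inc : forall n, mx_le (x n) (x n.+1) by move=> n; case: (P n).
have bnd : forall n, mx_le (x n) (const_mx 1).
  move=> n i j; have [h1 _ h3] := P n.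
  have h := h3 i 0; rewrite [X in _ <= X]mxE in h.
  rewrite [X in _ <= X]mxE; apply: le_trans h.
  rewrite [X in _ <= X]mxE (bigD1 j) //=.
  rewrite [X in _ <= _ * X + _]mxE mulr1 lerDl; apply: sumr_ge0 => k _.
  by rewrite mxE mulr1; exact: h1.
have [X [HX Hle HB]] := mxcvg_mono inc bnd.
have fixX : G X = X.
  have h1 := mxcvg_shift HX.
  apply: (mxcvg_unique _ h1).
  rewrite /G /Fr; apply: mxcvgD => //; apply: mxcvgZ.
  apply: mxcvgD; last by apply: mxcvgM => //; apply: mxcvgM => //; exact: mxcvg_cst.
  apply: mxcvgD; last by apply: mxcvgM => //; exact: mxcvg_cst.
  apply: mxcvgD; first exact: mxcvg_cst.
  by apply: mxcvgM => //; exact: mxcvg_cst.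
exists X; split.
- by apply/mx_nonnegE; exact: (Hle 0%N).
- move: fixX; rewrite /G /riccati -[X in _ = X]addr0 => /addrI /eqP.
  rewrite scalemx_eq0 => /orP [|/eqP //].
  by rewrite /kc invr_eq0 (negbTE c2_neq0).
- have h := mxcvgM HX (mxcvg_cst (X:=const_mx 1 : 'cV_m)).
  by apply: (mxcvg_le h) => n; case: (P n).
- move=> S S0 FS; apply: (mxcvg_le HX); elim => [|n IH].
    by apply/mx_nonnegE.
  apply: mx_le_trans (G_le_S FS).
  by apply: Gmono => //; case: (P n).
Qed.

End Ric.

Section Alg.
Variables (R : realType) (p m : nat).
Implicit Types (tpp Bi MB : 'M[R]_p) (u Ai MA V : 'M[R]_m) (tc X Sy Pl Pm : 'M[R]_(p, m)).

Ltac expand :=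
  rewrite ?(mulmxDl, mulmxDr, mulmxBl, mulmxBr, mulmxN, mulNmx, mul1mx, mulmx1);
  do ![rewrite -scalemxAl | rewrite -scalemxAr];
  rewrite ?mulmxA.

Lemma key1 tc tpp u X a :
  a *: tc + (1%:M + a *: tpp) *m X = X *m (1%:M - a *: u) + a *: (tc + tpp *m X + X *m u).
Proof.
expand; move: (tpp *m X) (X *m u) => v1 v2.
apply/matrixP => i j; rewrite !mxE; ring.
Qed.

Lemma key2 tc tpp u X b :
  b *: tc + X *m (1%:M + b *: u) = (1%:M - b *: tpp) *m X + b *: (tc + tpp *m X + X *m u).
Proof.
expand; move: (tpp *m X) (X *m u) => v1 v2.
apply/matrixP => i j; rewrite !mxE; ring.
Qed.

Lemma key3 tc tpp u X a b :
  (a *: tc) *m (1%:M + b *: u) + (b *: tc) *m (1%:M - a *: u)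
   + (1%:M + a *: tpp) *m X *m (1%:M + b *: u)
  = (1%:M - b *: tpp) *m X *m (1%:M - a *: u) + (a + b) *: (tc + tpp *m X + X *m u).
Proof.
expand; move: (tpp *m X *m u) (tpp *m X) (tc *m u) (X *m u) => v1 v2 v3 v4.
apply/matrixP => i j; rewrite !mxE; ring.
Qed.

Lemma alg1 Pl (Pp : 'M[R]_p) Ai MA X Sy a :
  MA *m Ai = 1%:M -> Pl + Pp *m X = X *m MA + a *: Sy ->
  Pl *m Ai + Pp *m X *m Ai = X + a *: (Sy *m Ai).
Proof.
move=> hA k; rewrite -mulmxDl k mulmxDl -mulmxA hA mulmx1 scalemxAl //.
Qed.

Lemma alg2 Bi MB Pm V X Sy b :
  Bi *m MB = 1%:M -> Pm + X *m V = MB *m X + b *: Sy ->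
  Bi *m Pm + Bi *m X *m V = X + b *: (Bi *m Sy).
Proof.
move=> hB k; rewrite -mulmxA -mulmxDr k mulmxDr mulmxA hB mul1mx scalemxAr //.
Qed.

Lemma alg3 Bi MB Ai MA V Pl Pm (Pp : 'M[R]_p) X Sy s :
  Bi *m MB = 1%:M -> MA *m Ai = 1%:M ->
  Pl *m V + Pm *m MA + Pp *m X *m V = MB *m X *m MA + s *: Sy ->
  Bi *m (Pl *m (V *m Ai) + Pm) + Bi *m Pp *m X *m (V *m Ai)
   = X + s *: (Bi *m Sy *m Ai).
Proof.
move=> hB hA k.
have -> : Bi *m (Pl *m (V *m Ai) + Pm) + Bi *m Pp *m X *m (V *m Ai)
   = Bi *m ((Pl *m V + Pm *m MA + Pp *m X *m V) *m Ai).
  rewrite !mulmxDl mulmxDr -(mulmxA Pm) hA mulmx1 !mulmxA mulmxDr !mulmxA.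
  by rewrite mulmxDr !mulmxA.
rewrite k mulmxDl mulmxDr -(mulmxA _ MA) hA mulmx1 !mulmxA hB mul1mx.
by rewrite -scalemxAr -scalemxAl.
Qed.

End Alg.

Section BlockP.
Variables (R : realType) (p m : nat) (T : 'M[R]_(p + m)) (s : R).

Lemma P_blocks :
  [/\ ulsubmx (1%:M + s *: T) = 1%:M + s *: ulsubmx T,
      ursubmx (1%:M + s *: T) = s *: ursubmx T &
      drsubmx (1%:M + s *: T) = 1%:M + s *: drsubmx T].
Proof.
rewrite -{1 3 5}(submxK T) (scalar_mx_block p m 1) scale_block_mx add_block_mx.
by rewrite block_mxKul block_mxKur block_mxKdr add0r.
Qed.

Lemma sub_nonneg (P : 'M[R]_(p + m)) : mx_nonneg P ->
  [/\ mx_nonneg (ulsubmx P), mx_nonneg (ursubmx P) & mx_nonneg (drsubmx P)].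
Proof. by move=> h; split => i j; rewrite !mxE. Qed.

End BlockP.

Section Main.
Variables (R : realType) (p m : nat) (T : 'M[R]_(p + m)) (Psi : 'M[R]_(p, m))
  (lambda mu : R).
Hypotheses (gen : is_generator T) (minS : minimal_nonneg_solution T Psi)
  (l0 : 0 < lambda) (m0 : 0 < mu)
  (stl : stochastic (1%:M + lambda^-1 *: T))
  (stm : stochastic (1%:M + mu^-1 *: T)).

Local Notation Tpp := (ulsubmx T).
Local Notation Tc := (ursubmx T).
Local Notation Tmm := (drsubmx T).
Local Notation Tmp := (dlsubmx T).
Local Notation U := (Tmm + Tmp *m Psi).
Local Notation one_p := (const_mx 1 : 'cV[R]_p).
Local Notation one_m := (const_mx 1 : 'cV[R]_m).

Definition Syl (X : 'M[R]_(p, m)) := Tc + Tpp *m X + X *m U.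

Lemma Psi_nn : mx_nonneg Psi.
Proof. by case: minS. Qed.

Lemma hcl : forall i, 0 <= lambda + T i i.
Proof.
move=> i; have := stl.1 i i; rewrite !mxE eqxx mulr1n => h.
have -> : lambda + T i i = lambda * (1 + lambda^-1 * T i i).
  by field; rewrite lt0r_neq0.
by rewrite mulr_ge0 // ltW.
Qed.

Lemma Psi_props : exists Xs : 'M[R]_(p, m),
  [/\ mx_le Psi Xs, mx_le (Xs *m one_m) one_p &
      forall S, mx_nonneg S -> mx_le (Fr T S) 0 -> mx_le Xs S].
Proof.
have [Xs [Xn Xr Xrow Xmin]] := ric_iter gen l0 hcl.
exists Xs; split => //.
by case: minS => _ _ /(_ Xs Xn Xr).
Qed.

Lemma one_nn a : mx_nonneg (const_mx 1 : 'cV[R]_a).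
Proof. by move=> i j; rewrite mxE ler01. Qed.

Lemma Psi_row : mx_le (Psi *m one_m) one_p.
Proof.
have [Xs [h1 h2 _]] := Psi_props.
apply: mx_le_trans h2; apply: mx_le_mulr => //; exact: one_nn.
Qed.

Lemma SylPsi : Syl Psi = 0.
Proof.
case: minS => _ ric _; move: ric; rewrite /riccati /Syl mulmxDr mulmxA => <-.
move: (Psi *m Tmm) (Psi *m Tmp *m Psi) (Tpp *m Psi) Tc => a1 a2 a3 a4.
apply/matrixP => i j; rewrite !mxE; ring.
Qed.

Lemma syl_uniq S : mx_nonneg S -> mx_le S Psi -> Syl S = 0 -> S = Psi.
Proof.
move=> S0 SP SS.
have FS : mx_le (Fr T S) 0.
  have -> : Fr T S = Syl S - S *m Tmp *m (Psi - S).
    rewrite /Fr /Syl mulmxDr mulmxBr !mulmxA.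
    move: (S *m Tmm) (S *m Tmp *m Psi) (S *m Tmp *m S) (Tpp *m S) Tc => a1 a2 a3 a4 a5.
    apply/matrixP => i j; rewrite !mxE; ring.
  have h : mx_nonneg (S *m Tmp *m (Psi - S)).
    apply: mx_nonnegM; first by apply: mx_nonnegM => //; exact: gen_dl.
    by move=> i j; rewrite !mxE subr_ge0.
  rewrite SS sub0r => i j; rewrite [X in X <= _]mxE [X in _ <= X]mxE oppr_le0; exact: h.
have [Xs [h1 _ h3]] := Psi_props.
apply: mx_le_anti => //; apply: mx_le_trans h1 _; exact: h3.
Qed.

Lemma U_off : forall i j, i != j -> 0 <= U i j.
Proof.
move=> i j ne; rewrite mxE; apply: addr_ge0; first exact: gen_dr_off.
by apply: mx_nonnegM; [exact: gen_dl | exact: Psi_nn].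
Qed.

Lemma U_row : mx_le (U *m one_m) 0.
Proof.
have [_ r2] := gen_rows gen.
rewrite mulmxDl -mulmxA.
apply: (@mx_le_trans _ _ _ _ (Tmm *m one_m + Tmp *m one_p)).
  apply: mx_leD; first exact: mx_le_refl.
  apply: mx_le_mull; [exact: gen_dl | exact: Psi_row].
by rewrite addrC r2; exact: mx_le_refl.
Qed.

Lemma Tpp_row : mx_le (Tpp *m one_p) 0.
Proof.
have [r1 _] := gen_rows gen.
have -> : Tpp *m one_p = - (Tc *m one_m) by apply/eqP; rewrite -addr_eq0 r1.
move=> i j; rewrite [X in X <= _]mxE [X in _ <= X]mxE oppr_le0.
by apply: mx_nonnegM; [exact: gen_ur | exact: one_nn].
Qed.

Lemma A_props : (1%:M - lambda^-1 *: U) \in unitmx /\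
   mx_nonneg (invmx (1%:M - lambda^-1 *: U)).
Proof. apply: mmat; [by rewrite invr_gt0 | exact: U_off | exact: U_row]. Qed.

Lemma B_props : (1%:M - mu^-1 *: Tpp) \in unitmx /\
   mx_nonneg (invmx (1%:M - mu^-1 *: Tpp)).
Proof. apply: mmat; [by rewrite invr_gt0 | exact: gen_ul_off | exact: Tpp_row]. Qed.

Lemma Vmu_nn : mx_nonneg (1%:M + mu^-1 *: U).
Proof.
have [_ _ e] := P_blocks T mu^-1; have [_ _ h] := sub_nonneg stm.1.
rewrite e in h; rewrite scalerDr addrA; apply: mx_nonnegD => //.
apply: mx_nonnegZ; first by rewrite invr_ge0 ltW.
by apply: mx_nonnegM; [exact: gen_dl | exact: Psi_nn].
Qed.

Lemma series1 : mx_series_to (fun k => ulsubmx (1%:M + lambda^-1 *: T) ^+ k *m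
   ursubmx (1%:M + lambda^-1 *: T) *m invmx (1%:M - lambda^-1 *: U) ^+ k.+1) Psi.
Proof.
have [Au An] := A_props.
have [e1 e2 _] := P_blocks T lambda^-1.
have [n1 n2 _] := sub_nonneg stl.1.
have id1 : forall X, ursubmx (1%:M + lambda^-1 *: T) *m invmx (1%:M - lambda^-1 *: U)
    + ulsubmx (1%:M + lambda^-1 *: T) *m X *m invmx (1%:M - lambda^-1 *: U)
   = X + lambda^-1 *: (Syl X *m invmx (1%:M - lambda^-1 *: U)).
  move=> X; apply: alg1; first exact: mulmxV.
  by rewrite e1 e2 /Syl; exact: key1.
have fixP : Psi = ursubmx (1%:M + lambda^-1 *: T) *m invmx (1%:M - lambda^-1 *: U)
    + ulsubmx (1%:M + lambda^-1 *: T) *m Psi *m invmx (1%:M - lambda^-1 *: U).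
  by rewrite id1 SylPsi mul0mx scaler0 addr0.
have [S [HS SP Sn Sfix]] := series_fix n1 (mx_nonnegM n2 An) An Psi_nn fixP.
have SPsi : S = Psi.
  apply: syl_uniq => //.
  move: Sfix; rewrite id1 -{1}[S]addr0 => /addrI /esym /eqP.
  rewrite scalemx_eq0 invr_eq0 (negbTE (lt0r_neq0 l0)) /= => /eqP h.
  by rewrite -[Syl S]mulmx1 -(mulVmx Au) mulmxA h mul0mx.
move: HS; rewrite SPsi; congr mx_series_to; apply: funext => k.
by rewrite exprS -mulmxE !mulmxA.
Qed.

Lemma series2 : mx_series_to (fun n => invmx (1%:M - mu^-1 *: Tpp) ^+ n.+1 *m
   ursubmx (1%:M + mu^-1 *: T) *m (1%:M + mu^-1 *: U) ^+ n) Psi.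
Proof.
have [Bu Bn] := B_props.
have [_ f2 _] := P_blocks T mu^-1.
have [_ m2 _] := sub_nonneg stm.1.
have id2 : forall X, invmx (1%:M - mu^-1 *: Tpp) *m ursubmx (1%:M + mu^-1 *: T)
    + invmx (1%:M - mu^-1 *: Tpp) *m X *m (1%:M + mu^-1 *: U)
   = X + mu^-1 *: (invmx (1%:M - mu^-1 *: Tpp) *m Syl X).
  move=> X; apply: alg2; first exact: mulVmx.
  by rewrite f2 /Syl; exact: key2.
have fixP : Psi = invmx (1%:M - mu^-1 *: Tpp) *m ursubmx (1%:M + mu^-1 *: T)
    + invmx (1%:M - mu^-1 *: Tpp) *m Psi *m (1%:M + mu^-1 *: U).
  by rewrite id2 SylPsi mulmx0 scaler0 addr0.
have [S [HS SP Sn Sfix]] := series_fix Bn (mx_nonnegM Bn m2) Vmu_nn Psi_nn fixP.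
have SPsi : S = Psi.
  apply: syl_uniq => //.
  move: Sfix; rewrite id2 -{1}[S]addr0 => /addrI /esym /eqP.
  rewrite scalemx_eq0 invr_eq0 (negbTE (lt0r_neq0 m0)) /= => /eqP h.
  by rewrite -[Syl S]mul1mx -(mulmxV Bu) -mulmxA h mulmx0.
move: HS; rewrite SPsi; congr mx_series_to; apply: funext => k.
by rewrite exprSr -mulmxE !mulmxA.
Qed.

Lemma series3 : mx_series_to (fun j =>
   (invmx (1%:M - mu^-1 *: Tpp) *m (1%:M + lambda^-1 *: Tpp)) ^+ j
   *m invmx (1%:M - mu^-1 *: Tpp)
   *m (ursubmx (1%:M + lambda^-1 *: T) *m ((1%:M + mu^-1 *: U) *m invmx (1%:M - lambda^-1 *: U))
       + ursubmx (1%:M + mu^-1 *: T))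
   *m ((1%:M + mu^-1 *: U) *m invmx (1%:M - lambda^-1 *: U)) ^+ j) Psi.
Proof.
have [Au An] := A_props.
have [Bu Bn] := B_props.
have [e1 e2 _] := P_blocks T lambda^-1.
have [_ f2 _] := P_blocks T mu^-1.
have [n1 n2 _] := sub_nonneg stl.1.
have [_ m2 _] := sub_nonneg stm.1.
have Wn : mx_nonneg ((1%:M + mu^-1 *: U) *m invmx (1%:M - lambda^-1 *: U)).
  exact: mx_nonnegM Vmu_nn An.
have Ln : mx_nonneg (invmx (1%:M - mu^-1 *: Tpp) *m (1%:M + lambda^-1 *: Tpp)).
  by apply: mx_nonnegM => //; rewrite -e1.
have Cn : mx_nonneg (invmx (1%:M - mu^-1 *: Tpp) *m
   (ursubmx (1%:M + lambda^-1 *: T) *m ((1%:M + mu^-1 *: U) *m invmx (1%:M - lambda^-1 *: U))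
       + ursubmx (1%:M + mu^-1 *: T))).
  apply: mx_nonnegM => //; apply: mx_nonnegD => //; exact: mx_nonnegM.
have id3 : forall X, invmx (1%:M - mu^-1 *: Tpp) *m
   (ursubmx (1%:M + lambda^-1 *: T) *m ((1%:M + mu^-1 *: U) *m invmx (1%:M - lambda^-1 *: U))
       + ursubmx (1%:M + mu^-1 *: T))
   + invmx (1%:M - mu^-1 *: Tpp) *m (1%:M + lambda^-1 *: Tpp) *m X
     *m ((1%:M + mu^-1 *: U) *m invmx (1%:M - lambda^-1 *: U))
   = X + (lambda^-1 + mu^-1) *: (invmx (1%:M - mu^-1 *: Tpp) *m Syl X
        *m invmx (1%:M - lambda^-1 *: U)).
  move=> X; apply: alg3; [exact: mulVmx | exact: mulmxV |].
  by rewrite e2 f2 /Syl; exact: key3.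
have fixP : Psi = invmx (1%:M - mu^-1 *: Tpp) *m
   (ursubmx (1%:M + lambda^-1 *: T) *m ((1%:M + mu^-1 *: U) *m invmx (1%:M - lambda^-1 *: U))
       + ursubmx (1%:M + mu^-1 *: T))
   + invmx (1%:M - mu^-1 *: Tpp) *m (1%:M + lambda^-1 *: Tpp) *m Psi
     *m ((1%:M + mu^-1 *: U) *m invmx (1%:M - lambda^-1 *: U)).
  by rewrite id3 SylPsi mulmx0 mul0mx scaler0 addr0.
have [S [HS SP Sn Sfix]] := series_fix Ln Cn Wn Psi_nn fixP.
have SPsi : S = Psi.
  apply: syl_uniq => //.
  have ab : lambda^-1 + mu^-1 != 0.
    by apply: lt0r_neq0; apply: addr_gt0; rewrite invr_gt0.
  move: Sfix; rewrite id3 -{1}[S]addr0 => /addrI /esym /eqP.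
  rewrite scalemx_eq0 (negbTE ab) /= => /eqP h.
  have -> : Syl S = (1%:M - mu^-1 *: Tpp) *m (invmx (1%:M - mu^-1 *: Tpp) *m Syl S
        *m invmx (1%:M - lambda^-1 *: U)) *m (1%:M - lambda^-1 *: U).
    by rewrite !mulmxA mulmxV // mul1mx -mulmxA mulVmx // mulmx1.
  by rewrite h mulmx0 mul0mx.
move: HS; rewrite SPsi; congr mx_series_to; apply: funext => k.
by rewrite !mulmxA.
Qed.

End Main.

Unset Implicit Arguments.

Theorem theorem2 (R : realType) (p m : nat) (T : 'M[R]_(p + m))
  (Psi : 'M[R]_(p, m)) (lambda mu : R) :
  is_generator T ->
  minimal_nonneg_solution T Psi ->
  0 < lambda -> 0 < mu ->
  stochastic (1%:M + lambda^-1 *: T) ->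
  stochastic (1%:M + mu^-1 *: T) ->
  let Tpp := ulsubmx T in
  let Tmm := drsubmx T in
  let Tmp := dlsubmx T in
  let U := Tmm + Tmp *m Psi in
  let Plpp := ulsubmx (1%:M + lambda^-1 *: T) in
  let Plpm := ursubmx (1%:M + lambda^-1 *: T) in
  let Pmpm := ursubmx (1%:M + mu^-1 *: T) in
  let Vmu := 1%:M + mu^-1 *: U in
  let Ainv := invmx (1%:M - lambda^-1 *: U) in
  let Binv := invmx (1%:M - mu^-1 *: Tpp) in
  let Q := Binv *m (1%:M + lambda^-1 *: Tpp) in
  let W := (1%:M + mu^-1 *: U) *m Ainv in
  [/\ mx_series_to (fun k => Plpp ^+ k *m Plpm *m Ainv ^+ k.+1) Psi,
      mx_series_to (fun n => Binv ^+ n.+1 *m Pmpm *m Vmu ^+ n) Psi &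
      mx_series_to (fun j => Q ^+ j *m Binv *m (Plpm *m W + Pmpm) *m W ^+ j) Psi].
Proof.
move=> gen minS l0 m0 stl stm Tpp Tmm Tmp U Plpp Plpm Pmpm Vmu Ainv Binv Q W.
split.
- exact: (series1 gen minS l0 stl).
- exact: (series2 gen minS l0 m0 stl stm).
- exact: (series3 gen minS l0 m0 stl stm).
Qed.
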